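(* Consider the network with vertices $s_1,s_2,s_3,t$ and directed edges $(s_3,s_1),(s_3,s_2),(s_1,t),(s_2,t)$. Let $\mathcal{A}$ be a finite alphabet with $|\mathcal{A}|>1$, let $X_1^k,X_2^k,X_3^k$ be blocks of length $k$ whose $3k$ components are i.i.d. uniform on $\mathcal{A}$, and let $f:\mathcal{A}^3\to\mathcal{B}$ ($|\mathcal{B}|>1$, $f$ not constant in any of its arguments) be the demand function, applied componentwise to blocks. Define an equivalence relation on $\mathcal{A}^k$ by $\mathbf{x}_3\equiv\mathbf{x}_3'$ if and only if $f(\mathbf{x}_1,\mathbf{x}_2,\mathbf{x}_3)=f(\mathbf{x}_1,\mathbf{x}_2,\mathbf{x}_3')$ for all $(\mathbf{x}_1,\mathbf{x}_2)\in\mathcal{A}^k\times\mathcal{A}^k$, and let $g(X_3^k)$ be the equivalence class of $X_3^k$ under this relation. Then the range of $g(X_3^k)$ may be identified with a subset of $\{1,2,\ldots,|\mathcal{A}|^k\}$, and every admissible rate tuple $(R_{31},R_{32},R_1,R_2)$ satisfies $$R_{31}+R_{32}\ \ge\ \frac{H(g(X_3^k))}{k\log|\mathcal{A}|}.$$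
   Context: All logarithms are base 2 unless otherwise indicated; $H_{q}$ denotes entropy in base $q$. Source $s_j$ observes $X_j^k$; the terminal $t$ must compute $f(X_1^k,X_2^k,X_3^k)=(f(X_1^{(i)},X_2^{(i)},X_3^{(i)}))_{i=1}^k\in\mathcal{B}^k$ with zero error. Let $\mathcal{Z}$ be a finite code alphabet with $|\mathcal{Z}|>1$ and $\mathcal{Z}^*$ the set of finite-length sequences over $\mathcal{Z}$. A source-network code $\mathcal{C}_{f,k}$ consists of encoders $\phi_{(s_3,s_1)},\phi_{(s_3,s_2)}:\mathcal{A}^k\to\mathcal{Z}^*$, $\phi_{(s_1,t)},\phi_{(s_2,t)}:\mathcal{A}^k\times\mathcal{Z}^*\to\mathcal{Z}^*$, and a decoder $\psi_t:\mathcal{Z}^*\times\mathcal{Z}^*\to\mathcal{B}^k$; writing $\mathbf{Z}_{31}=\phi_{(s_3,s_1)}(X_3^k)$, $\mathbf{Z}_{32}=\phi_{(s_3,s_2)}(X_3^k)$, $\mathbf{Z}_1=\phi_{(s_1,t)}(X_1^k,\mathbf{Z}_{31})$, $\mathbf{Z}_2=\phi_{(s_2,t)}(X_2^k,\mathbf{Z}_{32})$, it is required that $\Pr\{\psi_t(\mathbf{Z}_1,\mathbf{Z}_2)\neq f(X_1^k,X_2^k,X_3^k)\}=0$. A tuple $\mathbf{R}=(R_{31},R_{32},R_1,R_2)$ is admissible if for every $\epsilon>0$ there exist a sufficiently large $k$ and such a code with $\log|\mathcal{Z}|\,\mathbb{E}\ell(\mathbf{Z}_e)\le k\log|\mathcal{A}|(R_e+\epsilon)$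 for each $e\in\{31,32,1,2\}$, where $\ell(\cdot)$ is length in symbols of $\mathcal{Z}$ and the expectation is over the messages. *)

(* Defs.v *)
From HB Require Import structures.
From mathcomp Require Import all_boot all_order all_algebra.
From mathcomp Require Import reals exp.
Set Implicit Arguments. Unset Strict Implicit. Unset Printing Implicit Defensive.
Import Order.TTheory GRing.Theory Num.Theory.
Local Open Scope ring_scope.

Definition log2 {R : realType} (x : R) : R := ln x / ln 2.

Definition blk (A : finType) (k : nat) := {ffun 'I_k -> A}.

Definition fblk (A B : finType) (f : A -> A -> A -> B) (k : nat)
  (x1 x2 x3 : blk A k) : {ffun 'I_k -> B} :=
  [ffun i => f (x1 i) (x2 i) (x3 i)].

Definition nonconst_each (A B : finType) (f : A -> A -> A -> B) : Prop :=
  [/\ (exists a a' b c, f a b c != f a' b c),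
      (exists a b b' c, f a b c != f a b' c) &
      (exists a b c c', f a b c != f a b c')].

Definition fequiv (A B : finType) (f : A -> A -> A -> B) (k : nat)
  (x3 y3 : blk A k) : bool :=
  [forall x1 : blk A k, forall x2 : blk A k, fblk f x1 x2 x3 == fblk f x1 x2 y3].

Definition gclass (A B : finType) (f : A -> A -> A -> B) (k : nat)
  (x3 : blk A k) : {set blk A k} := [set y | fequiv f x3 y].

Definition prob_unif (R : realType) (T : finType) (E : {set T}) : R :=
  #|E|%:R / #|T|%:R.

Definition entropy_unif (R : realType) (T U : finType) (g : T -> U) : R :=
  - \sum_(u : U)
      (let p := prob_unif R [set t | g t == u] in
       if p == 0 then 0 else p * log2 p).

(* A source-network code for the network s3->s1, s3->s2, s1->t, s2->t,
   with block length n and code alphabet Z *)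
Record snc (A B Z : finType) (n : nat) := SNC {
  phi31 : blk A n -> seq Z;
  phi32 : blk A n -> seq Z;
  phi1  : blk A n -> seq Z -> seq Z;
  phi2  : blk A n -> seq Z -> seq Z;
  psi   : seq Z -> seq Z -> {ffun 'I_n -> B}
}.

Section Code.
Variables (A B Z : finType) (n : nat) (C : snc A B Z n).
Definition msgZ31 (x : blk A n * blk A n * blk A n) := phi31 C x.2.
Definition msgZ32 (x : blk A n * blk A n * blk A n) := phi32 C x.2.
Definition msgZ1 (x : blk A n * blk A n * blk A n) := phi1 C x.1.1 (phi31 C x.2).
Definition msgZ2 (x : blk A n * blk A n * blk A n) := phi2 C x.1.2 (phi32 C x.2).
End Code.

Definition err_prob (R : realType) (A B Z : finType) (f : A -> A -> A -> B)
  (n : nat) (C : snc A B Z n) : R :=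
  prob_unif R [set x : blk A n * blk A n * blk A n |
                 psi C (msgZ1 C x) (msgZ2 C x) != fblk f x.1.1 x.1.2 x.2].

Definition exp_len (R : realType) (A Z : finType) (n : nat)
  (m : blk A n * blk A n * blk A n -> seq Z) : R :=
  (\sum_(x : blk A n * blk A n * blk A n) (size (m x))%:R)
    / #|{: blk A n * blk A n * blk A n}|%:R.

Definition admissible {R : realType} (A B Z : finType) (f : A -> A -> A -> B)
  (R31 R32 R1 R2 : R) : Prop :=
  forall eps : R, 0 < eps -> forall N : nat, exists n : nat, (N <= n)%N /\
    exists C : snc A B Z n,
      err_prob R f C = 0 /\
      log2 #|Z|%:R * exp_len R (msgZ31 C) <= n%:R * log2 #|A|%:R * (R31 + eps) /\
      log2 #|Z|%:R * exp_len R (msgZ32 C) <= n%:R * log2 #|A|%:R * (R32 + eps) /\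
      log2 #|Z|%:R * exp_len R (msgZ1 C)  <= n%:R * log2 #|A|%:R * (R1 + eps) /\
      log2 #|Z|%:R * exp_len R (msgZ2 C)  <= n%:R * log2 #|A|%:R * (R2 + eps).

(* Main.v *)
Require Import Defs.
From HB Require Import structures.
From mathcomp Require Import all_boot all_order all_algebra.
From mathcomp Require Import reals exp.
From mathcomp Require Import ring lra sequences.
Set Implicit Arguments. Unset Strict Implicit. Unset Printing Implicit Defensive.
Import Order.TTheory GRing.Theory Num.Theory.
Local Open Scope ring_scope.


Lemma fequivP (A B : finType) (f : A -> A -> A -> B) (k : nat) (x y : blk A k) :
  reflect (forall x1 x2, fblk f x1 x2 x = fblk f x1 x2 y) (fequiv f x y).
Proof.
apply: (iffP forallP) => [H x1 x2|H x1]; first by have /forallP/(_ x2)/eqP := H x1.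
by apply/forallP => x2; rewrite H.
Qed.

Lemma gclass_eq (A B : finType) (f : A -> A -> A -> B) (k : nat) (x y : blk A k) :
  (forall x1 x2, fblk f x1 x2 x = fblk f x1 x2 y) -> gclass f x = gclass f y.
Proof.
move=> H; apply/setP => z; rewrite !inE.
apply/fequivP/fequivP => H2 x1 x2; by rewrite -H2 H.
Qed.

Lemma gclass_refl (A B : finType) (f : A -> A -> A -> B) (k : nat) (x : blk A k) :
  x \in gclass f x.
Proof. by rewrite inE; apply/fequivP. Qed.

Lemma gclass_eqE (A B : finType) (f : A -> A -> A -> B) (k : nat) (x y : blk A k) :
  (gclass f y == gclass f x) = (y \in gclass f x).
Proof.
apply/eqP/idP => [<-|]; first exact: gclass_refl.
rewrite inE => /fequivP H; apply: esym; exact: gclass_eq.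
Qed.

Definition c1 (A B : finType) (f : A -> A -> A -> B) (a : A) : {set A} :=
  [set b | [forall a1, forall a2, f a1 a2 a == f a1 a2 b]].

Lemma gclass_memE (A B : finType) (f : A -> A -> A -> B) (k : nat) (x y : blk A k) :
  (y \in gclass f x) = [forall i, y i \in c1 f (x i)].
Proof.
rewrite inE; apply/fequivP/forallP => [H i|H x1 x2].
  rewrite inE; apply/forallP => a1; apply/forallP => a2.
  have := congr1 (fun g : {ffun 'I_k -> B} => g i) (H [ffun=> a1] [ffun=> a2]).
  by rewrite /fblk !ffunE => ->.
apply/ffunP => i; rewrite !ffunE.
by have := H i; rewrite inE => /forallP/(_ (x1 i))/forallP/(_ (x2 i))/eqP.
Qed.

Lemma card_gclass (R : realType) (A B : finType) (f : A -> A -> A -> B) (k : nat) (x : blk A k) :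
  (#|gclass f x|%:R : R) = \prod_i (#|c1 f (x i)|%:R).
Proof.
have -> : \prod_i (#|c1 f (x i)|%:R : R) = \prod_i \sum_(a : A) ((a \in c1 f (x i))%:R : R).
  apply: eq_bigr => i _; rewrite -sum1_card natr_sum big_mkcond /=.
  by apply: eq_bigr => a _; case: ifP.
rewrite bigA_distr_bigA /= -sum1_card natr_sum big_mkcond /=.
apply: eq_bigr => y _; rewrite gclass_memE.
case: forallP => [H|/forallP]. by rewrite big1 // => i _; rewrite H.
rewrite negb_forall => /existsP[i Hi].
by rewrite (bigD1 i) //= (negbTE Hi) mul0r.
Qed.


Lemma entropy_eq (R : realType) (A B : finType) (f : A -> A -> A -> B) (n : nat) :
  entropy_unif R (@gclass A B f n) =
  - (\sum_(t : blk A n) log2 (#|gclass f t|%:R / #|{: blk A n}|%:R) / #|{: blk A n}|%:R).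
Proof.
rewrite /entropy_unif; congr (- _).
set N := (#|{: blk A n}|%:R : R).
rewrite (partition_big (@gclass A B f n) predT) //=.
apply: eq_bigr => u _.
set p := prob_unif R _.
have -> : (if p == 0 then 0 else p * log2 p) = p * log2 p.
  by case: eqP => // ->; rewrite mul0r.
rewrite (eq_bigr (fun=> log2 p / N)); last first.
  move=> t /eqP gtu; rewrite /p /prob_unif; congr (log2 (_ / _) / _).
  congr (_%:R); apply: eq_card => y; rewrite !inE -gtu.
  by rewrite gclass_eqE inE.
rewrite sumr_const /p /prob_unif.
have -> : #|(fun i : blk A n => gclass f i == u)| = #|[set t | gclass f t == u]|.
  by apply: eq_card => y; rewrite inE.
by rewrite /N; ring.
Qed.


Lemma cardT_blk (R : realType) (A : finType) (n : nat) :
  (#|{: blk A n}|%:R : R) = \prod_(i < n) (#|A|%:R : R).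
Proof. by rewrite card_ffun card_ord natrX prodr_const card_ord. Qed.

Lemma ln_prod (R : realType) (n : nat) (F : 'I_n -> R) :
  (forall i, 0 < F i) -> ln (\prod_i F i) = \sum_i ln (F i).
Proof.
move=> HF.
have [] : 0 < \prod_i F i /\ ln (\prod_i F i) = \sum_i ln (F i); last by [].
apply: (big_ind2 (fun x y => 0 < x /\ ln x = y)).
- by rewrite ln1.
- move=> a b c d [a0 <-] [c0 <-]; split; first exact: mulr_gt0.
  by rewrite lnM.
- by move=> i _; split.
Qed.

Lemma sum_coord (R : realType) (A : finType) (n : nat) (phi : A -> R) (i : 'I_n) :
  (\sum_(t : blk A n) phi (t i)) * #|A|%:R = (\sum_a phi a) * #|{: blk A n}|%:R.
Proof.
pose G (j : 'I_n) (a : A) := if j == i then phi a else 1.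
have -> : \sum_(t : blk A n) phi (t i) = \sum_(t : {ffun 'I_n -> A}) \prod_j G j (t j).
  apply: eq_bigr => t _; rewrite (bigD1 i) //= /G eqxx big1 ?mulr1 //.
  by move=> j /negbTE ->.
rewrite -bigA_distr_bigA /= (bigD1 i) //= cardT_blk [X in _ = _ * X](bigD1 i) //=.
rewrite /G eqxx.
have -> : \prod_(j < n | j != i) \sum_(a : A) (if j == i then phi a else 1) = \prod_(j < n | j != i) (#|A|%:R : R).
  apply: eq_bigr => j /negbTE ->; by rewrite sumr_const.
ring.
Qed.

Definition h1 (R : realType) (A B : finType) (f : A -> A -> A -> B) : R :=
  - (\sum_a log2 (#|c1 f a|%:R / #|A|%:R)) / #|A|%:R.

Lemma c1_refl (A B : finType) (f : A -> A -> A -> B) a : a \in c1 f a.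
Proof. by rewrite inE; apply/forallP => a1; apply/forallP => a2. Qed.

Lemma entropy_closed (R : realType) (A B : finType) (f : A -> A -> A -> B) (n : nat) :
  (0 < #|A|)%N ->
  entropy_unif R (@gclass A B f n) = n%:R * h1 R f.
Proof.
move=> hA.
have Apos : (0 : R) < #|A|%:R by rewrite ltr0n.
have Npos : (0 : R) < #|{: blk A n}|%:R by rewrite cardT_blk prodr_gt0.
rewrite entropy_eq.
set N := (#|{: blk A n}|%:R : R).
set phi := fun a : A => log2 (#|c1 f a|%:R / #|A|%:R : R).
have E1 : forall t : blk A n, log2 (#|gclass f t|%:R / N) = \sum_i phi (t i).
  move=> t; rewrite /N card_gclass cardT_blk -prodf_div /log2 ln_prod.
    by rewrite mulr_suml.
  move=> i; apply: divr_gt0 => //; rewrite ltr0n card_gt0; apply/set0Pn.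
  by exists (t i); exact: c1_refl.
rewrite (eq_bigr (fun t : blk A n => (\sum_i phi (t i)) / N)); last by move=> t _; rewrite E1.
rewrite -mulr_suml exchange_big /=.
have E2 : forall i : 'I_n, \sum_(t : blk A n) phi (t i) = (\sum_a phi a) * N / #|A|%:R.
  move=> i; rewrite /N -(sum_coord phi i) mulrK //; by rewrite unitfE gt_eqF.
rewrite (eq_bigr (fun=> (\sum_a phi a) * N / #|A|%:R)); last by move=> i _; rewrite E2.
rewrite sumr_const card_ord /h1 -/phi.
rewrite -[_ *+ n]mulr_natl /phi /=.
by field; rewrite !gt_eqF.
Qed.


Lemma count_E (R : realType) (T Z : finType) (z0 : Z) (g : T -> {set T})
  (w1 w2 : T -> seq Z) (L1 L2 : nat) (E : {set T}) :
  (forall t, t \in g t) ->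
  (forall t t', w1 t = w1 t' -> w2 t = w2 t' -> g t = g t') ->
  (forall t, t \in E -> size (w1 t) = L1 /\ size (w2 t) = L2) ->
  \sum_(t in E) (#|g t|%:R : R)^-1 <= (#|Z| ^ L1 * #|Z| ^ L2)%:R.
Proof.
move=> grefl gw HE.
apply: (@le_trans _ _ (#|g @: E|%:R)).
  rewrite (partition_big_imset g) /= -sum1_card natr_sum.
  apply: ler_sum => C /imsetP[t0 t0E ->].
  rewrite (eq_bigr (fun=> (#|g t0|%:R : R)^-1)); last by move=> t /andP[_ /eqP ->].
  rewrite sumr_const.
  have gpos : (0 : R) < #|g t0|%:R by rewrite ltr0n card_gt0; apply/set0Pn; exists t0.
  apply: (@le_trans _ _ ((#|g t0|%:R : R)^-1 *+ #|g t0|)).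
    apply: ler_wpMn2l; first by rewrite invr_ge0 ltW.
    apply: subset_leq_card; apply/subsetP => t; rewrite unfold_in => /andP[_ /eqP <-].
    exact: grefl.
  by rewrite -(mulr_natr ((#|g t0|%:R : R)^-1)) mulVf // gt_eqF.
rewrite ler_nat.
pose tau t := (insubd (nseq_tuple L1 z0) (w1 t), insubd (nseq_tuple L2 z0) (w2 t)).
pose G y := if [pick t in E | tau t == y] is Some t then g t else set0.
have -> : g @: E = G @: (tau @: E).
  rewrite -imset_comp; apply: eq_in_imset => t tE /=; rewrite /G.
  case: pickP => [t' /andP[t'E /eqP Ht]|/(_ t)]; last by rewrite tE eqxx.
  have [h1 h2] := HE t tE; have [h1' h2'] := HE t' t'E.
  apply: gw.
    have := congr1 (fun y => val y.1) Ht => /=.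
    by rewrite !insubdK // unfold_in /= ?h1 ?h1'.
  have := congr1 (fun y => val y.2) Ht => /=.
  by rewrite !insubdK // unfold_in /= ?h2 ?h2'.
apply: (leq_trans (leq_imset_card _ _)).
apply: (leq_trans (max_card _)).
by rewrite card_prod !card_tuple.
Qed.


Lemma geo (R : realType) (r : R) (M : nat) : 0 <= r <= 1 ->
  0 <= (1 - r) * \sum_(i < M) r ^+ i <= 1.
Proof.
move=> /andP[r0 r1]; elim: M => [|M /andP[IH1 IH2]].
  by rewrite big_ord0 mulr0 lexx ler01.
rewrite big_ord_recl expr0.
rewrite (eq_bigr (fun i : 'I_M => r * r ^+ i)); last by move=> i _; rewrite /bump /= exprS.
rewrite -mulr_sumr.
have -> : (1 - r) * (1 + r * \sum_(i < M) r ^+ i) = (1 - r) + r * ((1 - r) * \sum_(i < M) r ^+ i) by ring.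
apply/andP; split; first by apply: addr_ge0; [lra | exact: mulr_ge0].
have : r * ((1 - r) * \sum_(i < M) r ^+ i) <= r by rewrite -[X in _ <= X]mulr1 ler_wpM2l.
lra.
Qed.

Lemma kraft (R : realType) (T Z : finType) (z0 : Z) (g : T -> {set T})
  (w1 w2 : T -> seq Z) (r : R) :
  0 <= r <= 1 ->
  (forall t, t \in g t) ->
  (forall t t', w1 t = w1 t' -> w2 t = w2 t' -> g t = g t') ->
  \sum_t (1 - r) ^+ 2 * (r / #|Z|%:R) ^+ (size (w1 t) + size (w2 t))%N / #|g t|%:R <= 1.
Proof.
move=> r01 grefl gw.
have zpos : (0 : R) < #|Z|%:R by rewrite ltr0n; apply/card_gt0P; exists z0.
set M := (\max_t (size (w1 t) + size (w2 t))%N).+1.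
have lt1 : forall t, (size (w1 t) < M)%N.
  by move=> t; rewrite ltnS (leq_trans _ (leq_bigmax (F := fun t => size (w1 t) + size (w2 t)) t)) // leq_addr.
have lt2 : forall t, (size (w2 t) < M)%N.
  by move=> t; rewrite ltnS (leq_trans _ (leq_bigmax (F := fun t => size (w1 t) + size (w2 t)) t)) // leq_addl.
pose p t : 'I_M * 'I_M := (inord (size (w1 t)), inord (size (w2 t))).
rewrite (partition_big p predT) //=.
apply: (@le_trans _ _ (\sum_(j : 'I_M * 'I_M) (1 - r) ^+ 2 * (r ^+ j.1 * r ^+ j.2))).
  apply: ler_sum => j _.
  rewrite (eq_bigr (fun t => (1 - r) ^+ 2 * (r / #|Z|%:R) ^+ (j.1 + j.2)%N * (#|g t|%:R)^-1)); last first.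
    move=> t /eqP <-; rewrite /p /= !inordK ?lt1 ?lt2 //.
  rewrite -mulr_sumr.
  have Hc := @count_E R T Z z0 g w1 w2 j.1 j.2 [set t | p t == j] grefl gw.
  have Hc' : \sum_(t | p t == j) (#|g t|%:R : R)^-1 <= (#|Z| ^ j.1 * #|Z| ^ j.2)%:R.
    rewrite (eq_bigl (fun t => t \in [set t | p t == j])); last by move=> t; rewrite inE.
    by apply: Hc => t; rewrite inE => /eqP <-; rewrite /p /= !inordK ?lt1 ?lt2; split.
  apply: (le_trans (ler_wpM2l _ Hc')).
    case/andP: r01 => r0 r1; apply: mulr_ge0; first exact: sqr_ge0.
    by apply: exprn_ge0; apply: divr_ge0 => //; apply: ltW.
  rewrite natrM !natrX exprD !expr_div_n.
  rewrite [X in X <= _](_ : _ = (1 - r) ^+ 2 * (r ^+ j.1 * r ^+ j.2)) //; field.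
  by rewrite !expf_neq0 // gt_eqF.
rewrite -(pair_bigA _ (fun i j : 'I_M => (1 - r) ^+ 2 * (r ^+ i * r ^+ j))) /=.
have -> : \sum_(i < M) \sum_(j < M) (1 - r) ^+ 2 * (r ^+ i * r ^+ j) =
   ((1 - r) * \sum_(i < M) r ^+ i) * ((1 - r) * \sum_(i < M) r ^+ i).
  have -> : ((1 - r) * \sum_(i < M) r ^+ i) * ((1 - r) * \sum_(i < M) r ^+ i) =
     (1 - r) ^+ 2 * ((\sum_(i < M) r ^+ i) * (\sum_(j < M) r ^+ j)) by ring.
  rewrite mulr_suml mulr_sumr; apply: eq_bigr => i _.
  by rewrite !mulr_sumr.
have /andP[g0 g1] := geo M r01.
by rewrite -[X in _ <= X]mulr1 ler_pM.
Qed.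


Lemma gibbs (R : realType) (T : finType) (g : T -> {set T}) (q : T -> R) :
  (forall t, t \in g t) -> (forall t, 0 < q t) ->
  \sum_t q t / #|g t|%:R <= 1 ->
  \sum_t ln (q t) <= \sum_t ln (#|g t|%:R / #|T|%:R).
Proof.
move=> grefl qpos Hk.
case: (pickP (fun _ : T => true)) => [t0 _|T0]; last first.
  by rewrite !big_pred0 // => t; rewrite T0.
have Npos : (0 : R) < #|T|%:R by rewrite ltr0n; apply/card_gt0P; exists t0.
have gpos : forall t, (0 : R) < #|g t|%:R by move=> t; rewrite ltr0n card_gt0; apply/set0Pn; exists t.
have H : forall t, ln (q t) - ln (#|g t|%:R / #|T|%:R) <= q t * #|T|%:R / #|g t|%:R - 1.
  move=> t.
  have pp : (0 : R) < #|g t|%:R / #|T|%:R by apply: divr_gt0.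
  rewrite -ln_div ?posrE //.
  have -> : q t / (#|g t|%:R / #|T|%:R) = 1 + (q t * #|T|%:R / #|g t|%:R - 1).
    by field; rewrite !gt_eqF.
  apply: le_ln1Dx.
  have : 0 < q t * #|T|%:R / #|g t|%:R by apply: divr_gt0 => //; apply: mulr_gt0.
  lra.
have H2 : \sum_t (ln (q t) - ln (#|g t|%:R / #|T|%:R)) <= \sum_t (q t * #|T|%:R / #|g t|%:R - 1) by apply: ler_sum => t _; exact: H.
rewrite sumrB big_split /= sumr_const in H2.
have H3 : \sum_i q i * #|T|%:R / #|g i|%:R = #|T|%:R * \sum_t q t / #|g t|%:R.
  rewrite mulr_sumr; apply: eq_bigr => t _; ring.
rewrite H3 in H2.
have H4 : #|T|%:R * \sum_t q t / #|g t|%:R <= #|T|%:R :> R.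
  by rewrite -[X in _ <= X]mulr1 ler_wpM2l // ltW.
have H5 : (-1) *+ #|T| = - (#|T|%:R) :> R by rewrite mulNrn.
rewrite H5 in H2.
lra.
Qed.


Lemma exp_len_eq (R : realType) (A Z : finType) (n : nat) (m : blk A n -> seq Z) (a0 : A) :
  exp_len R (fun x : blk A n * blk A n * blk A n => m x.2) =
  (\sum_(t : blk A n) (size (m t))%:R) / #|{: blk A n}|%:R.
Proof.
rewrite /exp_len.
rewrite -(pair_bigA _ (fun (y : blk A n * blk A n) (t : blk A n) => ((size (m t))%:R : R))) /=.
rewrite sumr_const.
rewrite [X in _ / X%:R]card_prod.
rewrite (_ : #|(xpredT : pred (blk A n * blk A n))| = #|{: blk A n * blk A n}|) //.
have Np : (0 < #|{: blk A n}|)%N by apply/card_gt0P; exists [ffun=> a0].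
have Kp : (0 < #|{: blk A n * blk A n}|)%N by rewrite card_prod muln_gt0 Np.
rewrite natrM -mulr_natr; field.
by rewrite !pnatr_eq0 -!lt0n Np Kp.
Qed.

Lemma core (R : realType) (A B Z : finType) (f : A -> A -> A -> B) (n : nat)
  (C : snc A B Z n) (c : R) (a0 : A) (z0 : Z) :
  err_prob R f C = 0 -> 0 < c ->
  n%:R * h1 R f * ln 2 <= - (2 * ln (1 - expR (- c))) +
     (exp_len R (msgZ31 C) + exp_len R (msgZ32 C)) * (c + ln #|Z|%:R).
Proof.
move=> Herr cpos.
have Np : (0 < #|{: blk A n}|)%N by apply/card_gt0P; exists [ffun=> a0].
have Ap : (0 < #|A|)%N by apply/card_gt0P; exists a0.
have NR : (0 : R) < #|{: blk A n}|%:R by rewrite ltr0n.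
have zR : (0 : R) < #|Z|%:R by rewrite ltr0n; apply/card_gt0P; exists z0.
have Hdec : forall x1 x2 x3, psi C (phi1 C x1 (phi31 C x3)) (phi2 C x2 (phi32 C x3)) = fblk f x1 x2 x3.
  move: Herr; rewrite /err_prob /prob_unif => /eqP; rewrite mulf_eq0 invr_eq0 !pnatr_eq0.
  case/orP => [|H]; last first.
    by exfalso; move: H; apply/negP; rewrite -lt0n; apply/card_gt0P; exists ([ffun=> a0], [ffun=> a0], [ffun=> a0]).
  rewrite cards_eq0 => /eqP S0 x1 x2 x3.
  have := in_set0 ((x1, x2), x3); rewrite -S0 inE /msgZ1 /msgZ2 /= => /negbFE/eqP.
  done.
have gw : forall t t', phi31 C t = phi31 C t' -> phi32 C t = phi32 C t' -> gclass f t = gclass f t'.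
  by move=> t t' e1 e2; apply: gclass_eq => x1 x2; rewrite -!Hdec e1 e2.
set r := expR (- c).
have r0 : 0 < r by apply: expR_gt0.
have r1 : r < 1 by rewrite expR_lt1 oppr_lt0.
have r01 : 0 <= r <= 1 by rewrite !ltW.
pose l t := (size (phi31 C t) + size (phi32 C t))%N.
pose q t := (1 - r) ^+ 2 * (r / #|Z|%:R) ^+ (l t).
have Kr := @kraft R (blk A n) Z z0 (@gclass A B f n) (phi31 C) (phi32 C) r r01 (@gclass_refl A B f n) gw.
have qpos : forall t, 0 < q t.
  move=> t; apply: mulr_gt0; first by apply: exprn_gt0; rewrite subr_gt0.
  by apply: exprn_gt0; apply: divr_gt0.
have Gb := @gibbs R (blk A n) (@gclass A B f n) q (@gclass_refl A B f n) qpos Kr.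
have E : n%:R * h1 R f * ln 2 = - (\sum_(t : blk A n) ln (#|gclass f t|%:R / #|{: blk A n}|%:R)) / #|{: blk A n}|%:R.
  rewrite -(entropy_closed R f n Ap) entropy_eq /log2 -!mulr_suml.
  have l2 : (0 : R) < ln 2 by apply: ln_gt0; rewrite ltr1n.
  set S := \sum_t _. by field; rewrite !gt_eqF.
have lnq : forall t, ln (q t) = 2 * ln (1 - r) - (l t)%:R * (c + ln #|Z|%:R).
  move=> t; rewrite /q lnM ?posrE; last first.
    - by apply: exprn_gt0; apply: divr_gt0.
    - by apply: exprn_gt0; rewrite subr_gt0.
  rewrite !lnXn ?subr_gt0 ?divr_gt0 // ln_div ?posrE // /r expRK.
  ring.
have Sq : \sum_t ln (q t) = #|{: blk A n}|%:R * (2 * ln (1 - r)) -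
    ((\sum_t (size (phi31 C t))%:R) + (\sum_t (size (phi32 C t))%:R)) * (c + ln #|Z|%:R).
  rewrite (eq_bigr _ (fun t _ => lnq t)) sumrB sumr_const -big_split /= mulr_suml.
  rewrite (_ : #|(xpredT : pred (blk A n))| = #|{: blk A n}|) // mulr_natl.
  congr (_ - _); first by rewrite mulr_natl.
  apply: eq_bigr => t _.
  by rewrite /l natrD.
have e31 : exp_len R (msgZ31 C) = (\sum_t (size (phi31 C t))%:R) / #|{: blk A n}|%:R :=
  exp_len_eq R (phi31 C) a0.
have e32 : exp_len R (msgZ32 C) = (\sum_t (size (phi32 C t))%:R) / #|{: blk A n}|%:R :=
  exp_len_eq R (phi32 C) a0.
rewrite E e31 e32.
have : - (\sum_(t : blk A n) ln (#|gclass f t|%:R / #|{: blk A n}|%:R)) / #|{: blk A n}|%:R <=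
       - (\sum_t ln (q t)) / #|{: blk A n}|%:R.
  by rewrite ler_pdivrMr // divfK ?gt_eqF // lerN2.
rewrite Sq => H; apply: (le_trans H).
rewrite le_eqVlt; apply/orP; left; apply/eqP.
set S1 := \sum_t _. set S2 := \sum_t _.
by rewrite /r; field; rewrite gt_eqF.
Qed.


Lemma exp_len_ge0 (R : realType) (A Z : finType) (n : nat)
  (m : blk A n * blk A n * blk A n -> seq Z) : 0 <= exp_len R m.
Proof. by rewrite /exp_len divr_ge0 // sumr_ge0. Qed.

Unset Implicit Arguments.
Set Strict Implicit.

Theorem lemma2 (R : realType) (A B Z : finType) (f : A -> A -> A -> B)
  (hA : (1 < #|A|)%N) (hB : (1 < #|B|)%N) (hZ : (1 < #|Z|)%N)
  (hf : nonconst_each f)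
  (R31 R32 R1 R2 : R) (hadm : @admissible R A B Z f R31 R32 R1 R2)
  (k : nat) (hk : (0 < k)%N) :
  entropy_unif R (@gclass A B f k) / (k%:R * log2 #|A|%:R) <= R31 + R32.
Proof.
have [a0 _] : exists a0 : A, True.
  by have /card_gt0P[a _] : (0 < #|A|)%N by apply: ltn_trans hA.
have [z0 _] : exists z0 : Z, True.
  by have /card_gt0P[z _] : (0 < #|Z|)%N by apply: ltn_trans hZ.
have l2 : (0 : R) < ln 2 by apply: ln_gt0; rewrite ltr1n.
have aP : (0 : R) < ln #|A|%:R by apply: ln_gt0; rewrite ltr1n.
have bP : (0 : R) < ln #|Z|%:R by apply: ln_gt0; rewrite ltr1n.
set a := ln (#|A|%:R : R). set b := ln (#|Z|%:R : R).
rewrite entropy_closed; last by apply: ltn_trans hA.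
set K := h1 R f * ln 2 / a.
have -> : k%:R * h1 R f / (k%:R * log2 #|A|%:R) = K.
  rewrite /K /log2 -/a; field.
  by rewrite !gt_eqF // ltr0n.
rewrite leNgt; apply/negP => HK.
set S := R31 + R32.
set d := K - S.
have dP : 0 < d by rewrite /d subr_gt0.
set eps := d / 8.
have eP : 0 < eps by rewrite /eps divr_gt0.
set c := d * b / (4 * (`|K| + 1)).
have cP : 0 < c.
  by rewrite /c; apply: divr_gt0; [apply: mulr_gt0 | apply: mulr_gt0 => //; apply: ltr_wpDl; rewrite ?normr_ge0].

set D := - (2 * ln (1 - expR (- c))).
set x := 4 * D / (a * d).
have DP : 0 < D.
  rewrite /D oppr_gt0 pmulr_rlt0 //; apply: ln_lt0.
  by rewrite subr_gt0 expR_lt1 oppr_lt0 cP ltrBlDr ltrDl expR_gt0.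
have x0 : 0 <= x by rewrite /x ltW // divr_gt0 // mulr_gt0.
have [n [Nn [C [Herr [h31 [h32 _]]]]]] := hadm eps eP (Num.Def.archi_bound x).+1.
have nP : (0 : R) < n%:R by rewrite ltr0n (leq_trans _ Nn).
have Hx : x < n%:R.
  by apply: (lt_le_trans (archi_boundP x0)); rewrite ler_nat (leq_trans _ Nn).
have Hc := @core R A B Z f n C c a0 z0 Herr cP.
rewrite -/b -/D in Hc.
set L1 := exp_len R (msgZ31 C) in h31 Hc.
set L2 := exp_len R (msgZ32 C) in h32 Hc.
have L1P : 0 <= L1 := exp_len_ge0 _ _.
have L2P : 0 <= L2 := exp_len_ge0 _ _.
move: h31 h32; rewrite /log2 -/a -/b => h31 h32.
have g31 : b * L1 <= n%:R * a * (R31 + eps).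
  move: h31; rewrite (_ : b / ln 2 * L1 = (b * L1) / ln 2); last by rewrite mulrAC.
  rewrite (_ : n%:R * (a / ln 2) * (R31 + eps) = (n%:R * a * (R31 + eps)) / ln 2); last by rewrite !mulrA mulrAC.
  by rewrite ler_pM2r // invr_gt0.
have g32 : b * L2 <= n%:R * a * (R32 + eps).
  move: h32; rewrite (_ : b / ln 2 * L2 = (b * L2) / ln 2); last by rewrite mulrAC.
  rewrite (_ : n%:R * (a / ln 2) * (R32 + eps) = (n%:R * a * (R32 + eps)) / ln 2); last by rewrite !mulrA mulrAC.
  by rewrite ler_pM2r // invr_gt0.
have PP : 0 < n%:R * a by apply: mulr_gt0.
have R31P : 0 <= R31 + eps.
  by rewrite -(pmulr_rge0 _ PP); apply: le_trans g31; apply: mulr_ge0 => //; apply: ltW.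
have R32P : 0 <= R32 + eps.
  by rewrite -(pmulr_rge0 _ PP); apply: le_trans g32; apply: mulr_ge0 => //; apply: ltW.
have SP : S + 2 * eps <= `|K| + 1.
  have := ler_norm K; rewrite /eps /d /S; move: HK; lra.
have S0 : 0 <= S + 2 * eps by rewrite /S; lra.
have Kp1 : 0 < `|K| + 1 by apply: ltr_wpDl; rewrite ?normr_ge0.
have H4 : (S + 2 * eps) * c <= b * d / 4.
  rewrite /c (_ : (S + 2 * eps) * (d * b / (4 * (`|K| + 1))) = ((S + 2 * eps) / (`|K| + 1)) * (b * d / 4)); last first.
    by field; rewrite gt_eqF.
  rewrite -[X in _ <= X]mul1r ler_wpM2r //; first by rewrite divr_ge0 // mulr_ge0 // ltW.
  by rewrite ler_pdivrMr // mul1r.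
have H3 : 4 * D < n%:R * a * d.
  move: Hx; rewrite /x ltr_pdivrMr ?mulr_gt0 //.
  by rewrite mulrA.
have gL : (L1 + L2) * b <= n%:R * a * (S + 2 * eps).
  rewrite /S; have := g31; have := g32; lra.
have gc : (L1 + L2) * c <= n%:R * a * (d / 4).
  have : (L1 + L2) * c * b <= n%:R * a * (d / 4) * b.
    rewrite mulrAC.
    apply: (le_trans (ler_wpM2r (ltW cP) gL)).
    rewrite -mulrA (_ : n%:R * a * (d / 4) * b = n%:R * a * (b * d / 4)); last by ring.
    have -> : n%:R * (a * (S + 2 * eps)) * c = n%:R * a * ((S + 2 * eps) * c) by ring.
    by apply: ler_wpM2l => //; exact: ltW.
  by rewrite ler_pM2r.
have eK : n%:R * h1 R f * ln 2 = n%:R * a * K by rewrite /K; field; rewrite gt_eqF.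
rewrite eK mulrDr in Hc.
set P := n%:R * a in PP H3 gL gc Hc.
have eK2 : P * K = P * S + P * d by rewrite /d; ring.
have eS : P * (S + 2 * eps) = P * S + P * d / 4 by rewrite /eps; field.
rewrite eS in gL.
have ePd : P * (d / 4) = P * d / 4 by rewrite mulrA.
rewrite ePd in gc.
have Pd : 0 < P * d by apply: mulr_gt0.
lra.
Qed.
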